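(* For any positive integer $n$, define \[ S(n;t,y;q) := 1 + \sum_{j \geq 1} \left( t\, \overline{{ n-1 \brack j-1 }}_{q,t} \frac{(-tyq;q)_{j-1}}{(yq;q)_{j-1}} y^j q^{j^2} + \overline{{ n \brack j }}_{q,t} \frac{(-tyq;q)_{j}}{(yq;q)_{j}} y^j q^{j^2} \right). \] Then \[ S(n;t,y;q)= \frac{(-tyq;q)_{n}}{(yq;q)_{n}}. \]
   Context: An overpartition is a partition in which the last occurrence of each distinct part size may be overlined; its weight $|\lambda|$ is the sum of its parts. For integers $0\le b\le a$, $\overline{{a \brack b}}_{q,t}=\sum_{\lambda} t^{\#_o(\lambda)} q^{|\lambda|}$, the sum over all overpartitions $\lambda$ with largest part at most $a-b$ and at most $b$ parts, $\#_o(\lambda)$ being the number of overlined parts; for other integer pairs $(a,b)$ (e.g. $b>a$) it is $0$, so the sum defining $S$ is finite. $(x;q)_k=\prod_{j=1}^k(1-xq^{j-1})$, $(x;q)_0=1$. *)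

(* Defs.v *)
From mathcomp Require Import all_boot all_order all_algebra.
Set Implicit Arguments. Unset Strict Implicit. Unset Printing Implicit Defensive.
Import GRing.Theory.
Local Open Scope ring_scope.

(* An overpartition is represented as the list of its parts written in
   nonincreasing order, each part paired with a flag telling whether it is
   overlined.  Consecutive parts x, y (y right after x) satisfy y <= x, and
   if x is overlined then y < x (x must be the last occurrence of its size). *)
Definition overpart_rel (x y : nat * bool) : bool :=
  if x.2 then (y.1 < x.1)%N else (y.1 <= x.1)%N.

Definition is_overpartition (s : seq (nat * bool)) : bool :=
  all (fun p => 0 < p.1)%N s && sorted overpart_rel s.

Definition op_weight (s : seq (nat * bool)) : nat := sumn (map fst s).
Definition op_noverlined (s : seq (nat * bool)) : nat := count snd s.

Definition op_decode (m : nat) (s : seq ('I_m.+1 * bool)) : seq (nat * bool) :=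
  map (fun x => (nat_of_ord x.1, x.2)) s.

(* Overpartition analogue of the Gaussian polynomial:
   sum over overpartitions with largest part <= a - b and at most b parts
   of t^(#overlined) q^(weight); 0 if b > a. Every such overpartition occurs
   exactly once as op_decode of a k-tuple, k = number of parts <= b. *)
Definition ogauss {R : comRingType} (a b : nat) (q t : R) : R :=
  if (b <= a)%N then
    \sum_(k < b.+1)
      \sum_(s : k.-tuple ('I_(a - b).+1 * bool) |
             is_overpartition (op_decode s))
        t ^+ op_noverlined (op_decode s) * q ^+ op_weight (op_decode s)
  else 0.

Definition qpoch {R : comRingType} (x q : R) (k : nat) : R :=
  \prod_(i < k) (1 - x * q ^+ i).

(* S(n;t,y;q); terms with j > n vanish (both Gaussian factors are 0). *)
Definition Sfun {F : fieldType} (n : nat) (t y q : F) : F :=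
  1 + \sum_(1 <= j < n.+1)
        ( t * ogauss (n.-1) (j.-1) q t
            * (qpoch (- t * y * q) q j.-1 / qpoch (y * q) q j.-1)
            * y ^+ j * q ^+ (j ^ 2)
        + ogauss n j q t
            * (qpoch (- t * y * q) q j / qpoch (y * q) q j)
            * y ^+ j * q ^+ (j ^ 2)).

(* Main.v *)
Require Import Defs.
From mathcomp Require Import all_boot all_order all_algebra.
From mathcomp Require Import zify ring lra.
Set Implicit Arguments. Unset Strict Implicit. Unset Printing Implicit Defensive.
Import GRing.Theory.
Local Open Scope ring_scope.

Lemma tuple_split (R : comNzRingType) (T : finType) k (P : pred (k.+1.-tuple T)) (F : k.+1.-tuple T -> R) :
  \sum_(s : k.+1.-tuple T | P s) F s =
  \sum_(x : T) \sum_(s : k.-tuple T | P [tuple of x :: s]) F [tuple of x :: s].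
Proof.
rewrite (pair_big_dep xpredT (fun (x : T) (s : k.-tuple T) => P [tuple of x :: s]) (fun (x : T) (s : k.-tuple T) => F [tuple of x :: s])) /=.
rewrite (reindex (fun p : T * k.-tuple T => [tuple of p.1 :: p.2])) /=; first by [].
exists (fun s => (thead s, behead_tuple s)).
  by move=> [x s] _ /=; rewrite theadE; congr pair; apply: val_inj.
by move=> s _ /=; rewrite -tuple_eta.
Qed.

Lemma orel_trans : transitive overpart_rel.
Proof.
move=> y x z; rewrite /overpart_rel; case: x.2; case: y.2 => /=; lia.
Qed.

Lemma op_cons i b d M :
  is_overpartition ((i,b)::d) && all (fun p => p.1 <= M)%N ((i,b)::d) =
  [&& (0 < i)%N, (i <= M)%N, is_overpartition d &
      all (fun p => p.1 <= (if b then i.-1 else i))%N d].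
Proof.
rewrite /is_overpartition /= path_sortedE; last exact: orel_trans.
case: (ltnP 0 i) => Hi /=; last by [].
case: (leqP i M) => HM /=; last by rewrite !andbF.
have E : all (overpart_rel (i, b)) d && all (fun p : nat * bool => (p.1 <= M)%N) d =
  all (fun p : nat * bool => (p.1 <= (if b then i.-1 else i))%N) d.
  rewrite -all_predI; apply: eq_all => -[p c] /=; rewrite /overpart_rel /=.
  by case: b; lia.
rewrite -E.
by case: (all _ d); case: (all _ d); case: (sorted _ d); case: (all _ d).
Qed.

Fixpoint ff (R : comNzRingType) (q t : R) (k M : nat) : R :=
  if k is k'.+1 then
    \sum_(0 <= x < M.+1 | (0 < x)%N) q ^+ x * (ff q t k' x + t * ff q t k' x.-1)
  else 1.

Lemma op_decode_cons m (x : 'I_m.+1 * bool) s :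
  op_decode (x :: s) = (nat_of_ord x.1, x.2) :: op_decode s.
Proof. by []. Qed.

Lemma comb (R : comNzRingType) (q t : R) m k M : (M <= m)%N ->
  \sum_(s : k.-tuple ('I_m.+1 * bool) | is_overpartition (op_decode s)
        && all (fun p => p.1 <= M)%N (op_decode s))
     t ^+ op_noverlined (op_decode s) * q ^+ op_weight (op_decode s) = ff q t k M.
Proof.
elim: k M => [|k IH] M HM.
  rewrite (big_pred1 [tuple]) /=; first by rewrite /op_noverlined /op_weight /= !expr0 mulr1.
  by move=> s; rewrite tuple0 /= eq_refl.
rewrite tuple_split.
pose Hx (i : 'I_m.+1) (b : bool) := if (0 < i)%N && (i <= M)%N then
   (t ^+ b * q ^+ i) * ff q t k (if b then i.-1 else i) else 0.
transitivity (\sum_(x : 'I_m.+1 * bool) Hx x.1 x.2).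
  apply: eq_bigr => -[i b] _ /=.
  rewrite (eq_bigl (fun s : k.-tuple ('I_m.+1 * bool) => [&& (0 < i)%N, (i <= M)%N,
      is_overpartition (op_decode s) &
      all (fun p => p.1 <= (if b then i.-1 else i))%N (op_decode s)])); last first.
    by move=> s; exact: op_cons.
  rewrite /Hx; case: (ltnP 0 i) => Hi /=; last by rewrite big_pred0.
  case: (leqP i M) => HiM /=; last by rewrite big_pred0.
  rewrite -IH; last by case: b; have := ltn_ord i; lia.
  rewrite mulr_sumr; apply: eq_bigr => s _.
  rewrite /op_noverlined /op_weight /= !exprD; ring.
rewrite -(pair_bigA _ Hx) /=.
under eq_bigr => i _ do rewrite big_bool.
rewrite /=.
transitivity (\sum_(i < m.+1 | (0 < i)%N && (i <= M)%N) q ^+ i * (ff q t k i + t * ff q t k i.-1)).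
  rewrite [in RHS]big_mkcond; apply: eq_bigr => i _; rewrite /Hx.
  by case: ifP => _; [rewrite expr1 expr0; ring | rewrite addr0].
rewrite -(big_mkord (fun i => (0 < i)%N && (i <= M)%N) (fun i => q ^+ i * (ff q t k i + t * ff q t k i.-1))).
rewrite /= [RHS](big_nat_widen _ _ m.+1); last by [].
apply: eq_bigl => i; rewrite ltnS; case: (i <= m)%N (0 < i)%N (i <= M)%N => //= *; lia.
Qed.

Definition gg (R : comNzRingType) (q t : R) (M b : nat) : R := \sum_(k < b.+1) ff q t k M.

Lemma ogE (R : comNzRingType) (q t : R) a b :
  ogauss a b q t = if (b <= a)%N then gg q t (a - b) b else 0.
Proof.
rewrite /ogauss /gg; case: ifP => // _; apply: eq_bigr => k _.
rewrite -(comb q t k (leqnn (a - b))); apply: eq_bigl => s.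
suff -> : all (fun p => p.1 <= a - b)%N (op_decode s) by rewrite andbT.
by apply/allP => p /mapP [x _ ->] /=; rewrite -ltnS ltn_ord.
Qed.

Lemma ff_rec (R : comNzRingType) (q t : R) k M :
  ff q t k.+1 M.+1 = ff q t k.+1 M + q ^+ M.+1 * (ff q t k M.+1 + t * ff q t k M).
Proof. by rewrite /= big_mkcond big_nat_recr //= -big_mkcond. Qed.

Lemma gg_rec (R : comNzRingType) (q t : R) M b :
  gg q t M.+1 b.+1 = gg q t M b.+1 + q ^+ M.+1 * (gg q t M.+1 b + t * gg q t M b).
Proof.
rewrite /gg big_ord_recl [X in _ = X + _]big_ord_recl.
under eq_bigr => i _ do rewrite lift0 ff_rec.
have E : \sum_(i < b.+1) ff q t (lift ord0 i) M = \sum_(i < b.+1) ff q t i.+1 M.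
  by apply: eq_bigr => i _; rewrite lift0.
rewrite E /= big_split /= -mulr_sumr big_split /= -mulr_sumr mulrDr mulr_sumr mulr_sumr.
ring.
Qed.

Lemma gg0 (R : comNzRingType) (q t : R) b : gg q t 0 b = 1.
Proof.
rewrite /gg big_ord_recl /= big1 ?addr0 // => i _.
by rewrite /= big_mkcond big_nat1.
Qed.

Lemma gg_b0 (R : comNzRingType) (q t : R) M : gg q t M 0 = 1.
Proof. by rewrite /gg big_ord1. Qed.

Definition HH (R : comNzRingType) (q t : R) (k j : nat) : R :=
  if k is k'.+1 then ogauss k' j q t else 0.

Lemma HHz (R : comNzRingType) (q t : R) k j : (k <= j)%N -> HH q t k j = 0.
Proof. by case: k => //= k Hk; rewrite ogE; case: ifP => //; lia. Qed.

Lemma HH0 (R : comNzRingType) (q t : R) k : HH q t k.+1 0 = 1.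
Proof. by rewrite /= ogE /= gg_b0. Qed.

Lemma HH_rec (R : comNzRingType) (q t : R) k j :
  HH q t k.+2 j.+1 = HH q t k.+1 j.+1 + q ^+ (k - j) * (HH q t k.+1 j + t * HH q t k j).
Proof.
case: (ltngtP j k) => Hjk.
- have [M EM] : exists M, k = (j + M.+1)%N by exists (k - j).-1; lia.
  subst k; rewrite addnS /= !ogE.
  rewrite !ifT; try lia.
  have -> : ((j + M).+1 - j.+1 = M)%N by lia.
  have -> : ((j + M).+1 - j = M.+1)%N by lia.
  have -> : ((j + M) - j = M)%N by lia.
  have -> : ((j + M).+2 - j.+1 = M.+1)%N by lia.
  by rewrite gg_rec.
- rewrite (@HHz _ q t k.+2 j.+1) ?(@HHz _ q t k.+1 j.+1) ?(@HHz _ q t k.+1 j) ?(@HHz _ q t k j);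
    try lia.
  by rewrite !(mulr0, add0r, addr0).
- subst j; rewrite (@HHz _ q t k k) // /= !ogE ltnSn ltnn leqnn !subnn gg0.
  by rewrite gg0 expr0 mulr0 !addr0 add0r mul1r.
Qed.

Definition PP (F : fieldType) (q t y : F) j := qpoch (- t * y * q) q j / qpoch (y * q) q j.
Definition WT (F : fieldType) (q t : F) k y j :=
  (t * HH q t k j * PP q t y j + HH q t k.+1 j.+1 * PP q t y j.+1) * y ^+ j.+1 * q ^+ (j.+1 ^ 2).
Definition WW (F : fieldType) (q t : F) N k y := 1 + \sum_(j < N) WT q t k y j.

Lemma qpoch_recl (R : comNzRingType) (x q : R) j : qpoch x q j.+1 = (1 - x) * qpoch (x * q) q j.
Proof.
rewrite /qpoch big_ord_recl expr0 mulr1; congr (_ * _); apply: eq_bigr => i _.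
by rewrite lift0 exprS mulrA.
Qed.

Lemma qpoch_recr (R : comNzRingType) (x q : R) j : qpoch x q j.+1 = qpoch x q j * (1 - x * q ^+ j).
Proof. by rewrite /qpoch big_ord_recr. Qed.

Lemma qpoch0 (R : comNzRingType) (x q : R) : qpoch x q 0 = 1.
Proof. by rewrite /qpoch big_ord0. Qed.

Lemma PP0 (F : fieldType) (q t y : F) : PP q t y 0 = 1.
Proof. by rewrite /PP !qpoch0 divr1. Qed.

Lemma PP_shift (F : fieldType) (q t y : F) j :
  PP q t y j.+1 = (1 + t * y * q) / (1 - y * q) * PP q t (y * q) j.
Proof.
rewrite /PP !qpoch_recl mulf_div.
have -> : - t * y * q * q = - t * (y * q) * q by rewrite !mulrA.
by rewrite !mulNr opprK.
Qed.

Lemma WT_step (F : fieldType) (q t y : F) k i :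
  WT q t k.+2 y i.+1 = WT q t k.+1 y i.+1 +
    y * q ^+ k.+2 * ((1 + t * y * q) / (1 - y * q)) *
    (WT q t k.+1 (y * q) i + t * WT q t k (y * q) i).
Proof.
rewrite /WT.
case: (leqP i k) => Hik.
- rewrite (HH_rec q t k.+1 i.+1) (HH_rec q t k i) !subSS.
  rewrite (PP_shift q t y i.+1) (PP_shift q t y i).
  have e1 : q ^+ k.+2 = q ^+ (k - i) * q ^+ i.+2 by rewrite -exprD; congr (_ ^+ _); lia.
  have e2 : q ^+ (i.+2 ^ 2) = q ^+ (i.+1 ^ 2) * q ^+ i.+1 * q ^+ i.+2.
    rewrite -!exprD; congr (_ ^+ _); rewrite -!mulnn; nia.
  rewrite e1 e2 exprS exprMn.
  set c := (1 + t * y * q) / (1 - y * q).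
  ring.
- rewrite (@HHz _ q t k.+2 i.+1) ?(@HHz _ q t k.+3 i.+2) ?(@HHz _ q t k.+1 i.+1)
    ?(@HHz _ q t k.+2 i.+2) ?(@HHz _ q t k.+1 i) ?(@HHz _ q t k i); try lia.
  ring.
Qed.

Lemma WT_step0 (F : fieldType) (q t y : F) k :
  WT q t k.+2 y 0 = WT q t k.+1 y 0 +
    y * q ^+ k.+2 * ((1 + t * y * q) / (1 - y * q)) * (1 + t).
Proof.
rewrite /WT (HH_rec q t k.+1 0) !HH0 (PP_shift q t y 0) !PP0 subn0 !exprSr.
set c := (1 + t * y * q) / (1 - y * q).
ring.
Qed.

Lemma WW_rec (F : fieldType) (q t y : F) N k :
  WW q t N.+1 k.+2 y = WW q t N.+1 k.+1 y +
    y * q ^+ k.+2 * ((1 + t * y * q) / (1 - y * q)) *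
    (WW q t N k.+1 (y * q) + t * WW q t N k (y * q)).
Proof.
rewrite /WW !big_ord_recl.
under eq_bigr => i _ do rewrite lift0 WT_step.
have E : \sum_(i < N) WT q t k.+1 y (lift ord0 i) = \sum_(i < N) WT q t k.+1 y i.+1.
  by apply: eq_bigr => i _; rewrite lift0.
rewrite E WT_step0 big_split /= -mulr_sumr big_split /= -mulr_sumr.
set c := (1 + t * y * q) / (1 - y * q).
ring.
Qed.

Lemma WW0 (F : fieldType) (q t y : F) N : WW q t N 0 y = 1.
Proof.
rewrite /WW big1 ?addr0 // => j _; rewrite /WT /= ogE ltn0.
by rewrite !mulr0 !mul0r addr0 !mul0r.
Qed.

Lemma WW1 (F : fieldType) (q t y : F) N :
  WW q t N.+1 1 y = 1 + (t + PP q t y 1) * y * q.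
Proof.
rewrite /WW big_ord_recl big1 ?addr0.
  rewrite /WT HH0 /= ogE /= gg0 PP0 expr1; ring.
move=> i _; rewrite lift0 /WT !HHz //.
by rewrite !mulr0 !mul0r addr0 !mul0r.
Qed.

Lemma mainW (F : fieldType) (q t : F) k :
  (forall N y, (k <= N)%N -> qpoch (y * q) q k != 0 -> WW q t N k y = PP q t y k) /\
  (forall N y, (k.+1 <= N)%N -> qpoch (y * q) q k.+1 != 0 -> WW q t N k.+1 y = PP q t y k.+1).
Proof.
elim: k => [|k [IH0 IH1]].
  split; first by move=> N y _ _; rewrite WW0 PP0.
  move=> [|N] y // _ Hq; rewrite WW1 (PP_shift q t y 0) PP0.
  move: Hq; rewrite qpoch_recl qpoch0 mulr1 => Hq.
  by field.
split; first exact: IH1.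
move=> [|N] y // HN Hq.
have Hq1 : qpoch (y * q) q k.+1 != 0.
  by move: Hq; rewrite qpoch_recr mulf_eq0 negb_or => /andP [].
have Hq2 : (1 - y * q != 0) /\ qpoch (y * q * q) q k.+1 != 0.
  by move: Hq; rewrite qpoch_recl mulf_eq0 negb_or => /andP [].
case: Hq2 => Hyq Hq2.
have Hq3 : qpoch (y * q * q) q k != 0 /\ (1 - y * q * q * q ^+ k != 0).
  by move: Hq2; rewrite qpoch_recr mulf_eq0 negb_or => /andP [].
case: Hq3 => Hq3 Hq4.
have e1 : WW q t N.+1 k.+1 y = PP q t y k.+1 by apply: IH1 => //; lia.
have e2 : WW q t N k.+1 (y * q) = PP q t (y * q) k.+1 by apply: IH1 => //; rewrite mulrA; lia.
have e3 : WW q t N k (y * q) = PP q t (y * q) k by apply: IH0 => //; rewrite ?mulrA //; lia.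
rewrite WW_rec e1 e2 e3.
rewrite (PP_shift q t y k) (PP_shift q t y k.+1) /PP !qpoch_recr.
have -> : - t * (y * q) * q = - t * y * q * q by rewrite !mulrA.
move: Hq3 Hq4 Hyq.
set Na := qpoch (- t * y * q * q) q k.
set Db := qpoch (y * q * q) q k.
rewrite !exprS.
set Q := q ^+ k => Hq3 Hq4 Hyq.
field.
by rewrite Hq3 Hq4 Hyq.
Qed.

Lemma Sfun_WW (F : fieldType) (n : nat) (t y q : F) :
  (0 < n)%N -> Sfun n t y q = WW q t n n y.
Proof.
case: n => [|n] // _.
rewrite /Sfun /WW big_add1 /= big_mkord; congr (_ + _); apply: eq_bigr => j _.
rewrite /WT /PP /=; ring.
Qed.

Theorem theorem3p4 (F : fieldType) (n : nat) (t y q : F) :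
  (0 < n)%N ->
  qpoch (y * q) q n != 0 ->
  Sfun n t y q = qpoch (- t * y * q) q n / qpoch (y * q) q n.
Proof.
move=> Hn Hq; rewrite Sfun_WW //.
by have [H _] := mainW q t n; apply: H.
Qed.
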